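(* Let $\Pi$ be a program with nested expressions, and let $Q$ be a set of atoms that do not have regular occurrences in the heads of the rules of $\Pi$. For every $q\in Q$ let $\mathit{Def}(q)$ be a formula. Then the program $\Pi\cup\{q\leftarrow\mathit{Def}(q): q\in Q\}$ has the same answer sets as the program $\Pi\cup\{q\leftrightarrow\mathit{Def}(q): q\in Q\}$.
   Context: A literal is an atom $a$ or $\neg a$ (classical negation); a set of literals is consistent if it contains no pair $a,\neg a$. Elementary formulas are literals, $\bot$, $\top$; formulas are built from them with $\mathit{not}$, '','' (conjunction), '';'' (disjunction). A rule with nested expressions is $\mathit{Head}\leftarrow\mathit{Body}$ with formulas; a program is a set of such rules. For consistent $Z$: $Z\models l$ iff $l\in Z$; $Z\models\top$; $Z\not\models\bot$; $Z\models(F,G)$ iff both; $Z\models(F;G)$ iff at least one; $Z\models\mathit{not}\,F$ iff $Z\not\models F$; $Z$ satisfies a program if for every rule $Z\models\mathit{Body}$ implies $Z\models\mathit{Head}$. Reduct: $F^Z=F$ for elementary $F$; $(F,G)^Z=F^Z,G^Z$; $(F;G)^Z=F^Z;G^Z$; $(\mathit{not}\,F)^Z=\bot$ if $Z\models F$, else $\top$; $\Pi^Z$ consists of the rules $\mathit{Head}^Z\leftarrow\mathit{Body}^Z$. $Z$ is an answer set of a $\mathit{not}$-free program if it is a minimal consistent set satisfying it, and of arbitrary $\Pi$ if it is an answer set of $\Pi^Z$. An occurrence of a formula $F$ in a formula or rule is singular if the symbol immediately before it is the classical negation $\neg$, and regular otherwise. $F\leftrightarrow G$ stands for the pair of rules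 $F\leftarrow G$ and $G\leftarrow F$. *)

(* Defs.v *)
From Stdlib Require Import Classical ClassicalEpsilon.

Set Implicit Arguments.

Section NE.
Variable A : Type.

(* literals: a or (classical negation) ¬a *)
Inductive lit : Type := Pos (a : A) | Neg (a : A).

Inductive formula : Type :=
| FLit (l : lit)
| FBot
| FTop
| FNot (F : formula)
| FAnd (F G : formula)
| FOr (F G : formula).

Record rule : Type := mkRule { head : formula ; body : formula }.

Definition program := rule -> Prop.
Definition litset := lit -> Prop.

Definition consistent (Z : litset) : Prop := forall a, ~ (Z (Pos a) /\ Z (Neg a)).

Fixpoint sat (Z : litset) (F : formula) : Prop :=
  match F with
  | FLit l => Z l
  | FBot => False
  | FTop => True
  | FNot G => ~ sat Z G
  | FAnd G H => sat Z G /\ sat Z H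
  | FOr G H => sat Z G \/ sat Z H
  end.

Definition sat_rule (Z : litset) (r : rule) : Prop := sat Z (body r) -> sat Z (head r).
Definition sat_prog (Z : litset) (P : program) : Prop := forall r, P r -> sat_rule Z r.

Fixpoint reduct (Z : litset) (F : formula) : formula :=
  match F with
  | FLit l => FLit l
  | FBot => FBot
  | FTop => FTop
  | FNot G => if excluded_middle_informative (sat Z G) then FBot else FTop
  | FAnd G H => FAnd (reduct Z G) (reduct Z H)
  | FOr G H => FOr (reduct Z G) (reduct Z H)
  end.

Definition reduct_rule (Z : litset) (r : rule) : rule :=
  mkRule (reduct Z (head r)) (reduct Z (body r)).

Definition reduct_prog (P : program) (Z : litset) : program :=
  fun r => exists r0, P r0 /\ r = reduct_rule Z r0.

Definition answer_set_nf (P : program) (Z : litset) : Prop :=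
  consistent Z /\ sat_prog Z P /\
  (forall Y : litset, consistent Y -> (forall l, Y l -> Z l) -> sat_prog Y P ->
     forall l, Z l -> Y l).

Definition answer_set (P : program) (Z : litset) : Prop :=
  answer_set_nf (reduct_prog P Z) Z.

(* an occurrence of atom q in F is regular iff it is not immediately preceded
   by ¬, i.e. iff it is the literal Pos q *)
Fixpoint occurs_regular (q : A) (F : formula) : Prop :=
  match F with
  | FLit (Pos a) => a = q
  | FLit (Neg _) => False
  | FBot | FTop => False
  | FNot G => occurs_regular q G
  | FAnd G H | FOr G H => occurs_regular q G \/ occurs_regular q H
  end.

Definition add_defs (P : program) (Q : A -> Prop) (Def : A -> formula) : program :=
  fun r => P r \/ exists q, Q q /\ r = mkRule (FLit (Pos q)) (Def q).

(* Π ∪ {q ↔ Def(q) : q ∈ Q}, where q ↔ Def(q) is the pair q ← Def(q), Def(q) ← q *)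
Definition add_equivs (P : program) (Q : A -> Prop) (Def : A -> formula) : program :=
  fun r => P r \/ exists q, Q q /\
    (r = mkRule (FLit (Pos q)) (Def q) \/ r = mkRule (Def q) (FLit (Pos q))).

End NE.

(* Main.v *)
Require Import Defs.
From Stdlib Require Import Classical ClassicalEpsilon.

Section Aux.
Variable A : Type.
Variable Z : litset A.

Lemma mono_red (S T : litset A) (F : formula A) :
  (forall l, S l -> T l) -> sat S (reduct Z F) -> sat T (reduct Z F).
Proof.
  intros HST; induction F; simpl; auto.
  - destruct (excluded_middle_informative (sat Z F)); simpl; auto.
  - intros [a b]; auto.
  - intros [a|b]; auto.
Qed.

Variable Q : A -> Prop.

Lemma head_red (S T : litset A) (F : formula A) :
  (forall l, S l -> (forall q, Q q -> l <> Pos q) -> T l) ->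
  (forall q, Q q -> ~ occurs_regular q F) ->
  sat S (reduct Z F) -> sat T (reduct Z F).
Proof.
  intros HST; induction F; simpl; intros Hn; auto.
  - intros Hs. apply HST; auto. destruct l; intros q Hq E.
    + inversion E; subst. apply (Hn q Hq). simpl. reflexivity.
    + discriminate.
  - destruct (excluded_middle_informative (sat Z F)); simpl; auto.
  - intros [a b]; split; [apply IHF1 | apply IHF2]; auto;
      intros q Hq Ho; apply (Hn q Hq); simpl; auto.
  - intros [a|b]; [left; apply IHF1 | right; apply IHF2]; auto;
      intros q Hq Ho; apply (Hn q Hq); simpl; auto.
Qed.

Lemma sat_prog_red (P : program A) (Y : litset A) :
  sat_prog Y (reduct_prog P Z) <->
  (forall r0, P r0 -> sat Y (reduct Z (body r0)) -> sat Y (reduct Z (head r0))).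
Proof.
  split.
  - intros H r0 Pr. apply (H (reduct_rule Z r0)). exists r0; auto.
  - intros H r [r0 [Pr E]]; subst; unfold sat_rule; simpl; apply H; auto.
Qed.

Variable Pi : program A.
Variable Def : A -> formula A.
Hypothesis Hreg : forall q r, Q q -> Pi r -> ~ occurs_regular q (head r).

Definition goodS (Y S : litset A) : Prop :=
  (forall l, S l -> Y l) /\
  (forall q, Q q -> S (Pos q) -> sat S (reduct Z (Def q))).

Definition Wof (Y : litset A) : litset A := fun l =>
  Y l /\ ((forall q, Q q -> l <> Pos q) \/ exists S, goodS Y S /\ S l).

Lemma W_sub Y l : Wof Y l -> Y l.
Proof. intros [a _]; exact a. Qed.

Lemma W_good Y : forall q, Q q -> Wof Y (Pos q) -> sat (Wof Y) (reduct Z (Def q)).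
Proof.
  intros q Hq [Hy [Hl | [S [[HS1 HS2] HSl]]]].
  - exfalso; exact (Hl q Hq eq_refl).
  - apply (mono_red S); [| apply HS2; auto].
    intros l Sl. split; [auto | right; exists S; split; [split|]; auto].
Qed.

Lemma W_prog Y : sat_prog Y (reduct_prog (add_defs Pi Q Def) Z) ->
  sat_prog (Wof Y) (reduct_prog (add_equivs Pi Q Def) Z).
Proof.
  intros HY. apply sat_prog_red. rewrite sat_prog_red in HY.
  intros r0 [Pr | [q [Hq [E|E]]]].
  - intros Hb. apply (head_red Y).
    + intros l Yl Hl. split; auto.
    + intros q Hq. apply (Hreg q r0 Hq Pr).
    + apply HY; [left; auto|]. apply (mono_red (Wof Y)); auto. apply W_sub.
  - subst; simpl. intros Hb.
    assert (Yq : Y (Pos q)).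
    { apply (HY (mkRule (FLit (Pos q)) (Def q))).
      - right; exists q; auto.
      - simpl. apply (mono_red (Wof Y)); auto. apply W_sub. }
    split; auto. right.
    exists (fun l => Wof Y l \/ l = Pos q). split; [split|].
    + intros l [Wl | ->]; auto. apply W_sub; auto.
    + intros q' Hq' [Wl | E].
      * apply (mono_red (Wof Y)); [intros; left; auto|]. apply W_good; auto.
      * inversion E; subst. apply (mono_red (Wof Y)); [intros; left; auto|]. auto.
    + right; reflexivity.
  - subst; simpl. intros Hb. apply W_good; auto.
Qed.

End Aux.

Theorem mainTheorem13 (A : Type) (Pi : program A) (Q : A -> Prop)
  (Def : A -> formula A) :
  (forall q r, Q q -> Pi r -> ~ occurs_regular q (head r)) ->
  forall Z : litset A,
    answer_set (add_defs Pi Q Def) Z <-> answer_set (add_equivs Pi Q Def) Z.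
Proof.
  intros Hreg Z. unfold answer_set, answer_set_nf.
  assert (Sub : forall Y, sat_prog Y (reduct_prog (add_equivs Pi Q Def) Z) ->
            sat_prog Y (reduct_prog (add_defs Pi Q Def) Z)).
  { intros Y H. rewrite sat_prog_red in *. intros r0 [Pr | [q [Hq E]]]; apply H.
    - left; auto.
    - right; exists q; auto. }
  assert (Wcons : forall Y, consistent Y -> consistent (@Wof A Z Q Def Y)).
  { intros Y HY a [h1 h2]. apply (HY a); split; eapply W_sub; eauto. }
  split.
  - intros [Hc [Hs Hm]]. split; [auto | split].
    + rewrite sat_prog_red. intros r0 [Pr | [q [Hq [E|E]]]].
      * rewrite sat_prog_red in Hs. apply Hs. left; auto.
      * rewrite sat_prog_red in Hs. apply Hs. right; exists q; auto.
      * subst; simpl. intros Hb.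
        assert (HW := @W_prog A Z Q Pi Def Hreg Z Hs).
        assert (Zin := Hm _ (Wcons Z Hc) (fun l => @W_sub A Z Q Def Z l) (Sub _ HW)).
        apply (@mono_red A Z (@Wof A Z Q Def Z)); [apply W_sub|].
        apply (@W_good A Z Q Def); auto.
    + intros Y HYc HYs HYp. apply Hm; auto.
  - intros [Hc [Hs Hm]]. split; [auto | split].
    + apply Sub; auto.
    + intros Y HYc HYs HYp l Zl.
      apply (@W_sub A Z Q Def Y).
      apply (Hm _ (Wcons Y HYc)); auto.
      * intros l' Wl. apply HYs. eapply W_sub; eauto.
      * apply (@W_prog A Z Q Pi Def Hreg); auto.
Qed.
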